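(* Let $0<a<b$ and, for $i=1,2$, let $f_i=(f_{i,1},\dots,f_{i,m_i})^T$ be a vector of linearly independent continuously differentiable functions on $[a,b]$. For $i=1,2$ fix design points $a=t_{i,1}<t_{i,2}<\dots<t_{i,n_i}=b$, and set $$M_i=\int_a^b\dot f_i(t)\dot f_i^T(t)\,dt,\qquad C_i=M_i+\frac{f_i(a)f_i^T(a)}{a},$$ $$B_i=\sum_{j=2}^{n_i}\frac{[f_i(t_{i,j})-f_i(t_{i,j-1})][f_i(t_{i,j})-f_i(t_{i,j-1})]^T}{t_{i,j}-t_{i,j-1}}.$$ Assume $C_i$ and $B_i$ are non-singular for $i=1,2$. For weight vectors $\omega=(\omega_{i,j})_{i=1,2;\,j=2,\dots,n_i}$ with $\omega_{i,j}\in\mathbb{R}^{m_i}$ satisfying the unbiasedness constraints $$M_i=\sum_{j=2}^{n_i}\omega_{i,j}\big(f_i(t_{i,j})-f_i(t_{i,j-1})\big)^T,\qquad i=1,2,$$ define for $t\in[a,b]$ $$g_n(t,\omega)=\sum_{i=1}^2 f_i^T(t)\Big\{-C_i^{-1}M_iC_i^{-1}+\sum_{j=2}^{n_i}(t_{i,j}-t_{i,j-1})\,C_i^{-1}\omega_{i,j}\omega_{i,j}^TC_i^{-1}+C_i^{-1}\Big\}f_i(t),$$ and $\mu_{p,n}(\omega)=\big(\int_a^b g_n(t,\omega)^p\,dt\big)^{1/p}$ for $p\in[1,\infty)$, $\mu_{\infty,n}(\omega)=\sup_{t\in[a,b]}g_n(t,\omega)$. Then the weights $$\omega_{i,j}^*=M_iB_i^{-1}\frac{f_i(t_{i,j})-f_i(t_{i,j-1})}{t_{i,j}-t_{i,j-1}},\qquad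 j=2,\dots,n_i,\ i=1,2,$$ satisfy the unbiasedness constraints, and for every $p\in[1,\infty]$ they minimise $\mu_{p,n}(\omega)$ over all weight vectors satisfying the unbiasedness constraints. Equivalently, in terms of $\gamma_{i,j}=\omega_{i,j}\sqrt{t_{i,j}-t_{i,j-1}}$, the minimiser is $\gamma^*_{i,j}=M_iB_i^{-1}\frac{f_i(t_{i,j})-f_i(t_{i,j-1})}{\sqrt{t_{i,j}-t_{i,j-1}}}$.
   Context: Interpretation: in the models $Y_i(t_{i,j})=f_i^T(t_{i,j})\theta_i+\varepsilon_i(t_{i,j})$ with independent Brownian motion errors $\varepsilon_1,\varepsilon_2$, the estimators $\hat\theta_{i,n_i}=C_i^{-1}\{\sum_{j=2}^{n_i}\omega_{i,j}(Y_i(t_{i,j})-Y_i(t_{i,j-1}))+\frac{f_i(a)}{a}Y_i(a)\}$ are unbiased exactly under the stated constraints, and then $g_n(t,\omega)=\mathrm{Var}(f_1^T(t)\hat\theta_{1,n_1}-f_2^T(t)\hat\theta_{2,n_2})$; the claim is the purely matrix-analytic minimisation statement above. *)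

(* Defs.v *)
From Stdlib Require Import Reals Lra.
Open Scope R_scope.

Fixpoint sumR (n : nat) (g : nat -> R) : R :=
  match n with O => 0 | S n' => sumR n' g + g n' end.

Definition sumRange (lo hi : nat) (g : nat -> R) : R :=
  sumR (hi - lo) (fun k => g (lo + k)%nat).

(* vectors in R^m / m x m matrices, indices 0..m-1 *)
Definition vec := nat -> R.
Definition mat := nat -> nat -> R.

Definition mmul (m : nat) (A B : mat) : mat :=
  fun i j => sumR m (fun k => A i k * B k j).
Definition mvec (m : nat) (A : mat) (v : vec) : vec :=
  fun i => sumR m (fun k => A i k * v k).
Definition outer (u v : vec) : mat := fun i j => u i * v j.
Definition idm : mat := fun i j => if Nat.eqb i j then 1 else 0.
Definition madd (A B : mat) : mat := fun i j => A i j + B i j.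
Definition mopp (A : mat) : mat := fun i j => - A i j.
Definition mscale (c : R) (A : mat) : mat := fun i j => c * A i j.

Definition is_inverse (m : nat) (A Ainv : mat) : Prop :=
  forall i j, (i < m)%nat -> (j < m)%nat ->
    mmul m A Ainv i j = idm i j /\ mmul m Ainv A i j = idm i j.

Definition qform (m : nat) (A : mat) (v : vec) : R :=
  sumR m (fun i => sumR m (fun j => v i * A i j * v j)).

(* power for a nonnegative base (x^p with 0^p = 0) *)
Definition rpow (x y : R) : R := if Rlt_dec 0 x then Rpower x y else 0.

(* A regression model i: m functions f_k (k < m) with derivatives df_k,
   and n design points pt 0 < ... < pt (n-1)  (0-based: pt j = t_{i,j+1}). *)
Record model := Model {
  dim : nat;
  fn : nat -> R -> R;
  dfn : nat -> R -> R;
  npts : nat;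
  pt : nat -> R }.

Definition fvec (md : model) (t : R) : vec := fun k => fn md k t.
(* increment f(t_j) - f(t_{j-1}) and step t_j - t_{j-1}, for 1 <= j <= n-1 *)
Definition dlt (md : model) (j : nat) : vec :=
  fun k => fn md k (pt md j) - fn md k (pt md (j - 1)).
Definition hstep (md : model) (j : nat) : R := pt md j - pt md (j - 1).

(* f continuously differentiable on [a,b] (one-sided at endpoints),
   df its derivative; components linearly independent on [a,b];
   design a = t_1 < ... < t_n = b. *)
Definition model_ok (a b : R) (md : model) : Prop :=
  (forall k, (k < dim md)%nat -> forall t, a <= t <= b ->
     limit1_in (fun s => (fn md k s - fn md k t) / (s - t))
               (fun s => a <= s <= b /\ s <> t) (dfn md k t) t /\
     limit1_in (dfn md k) (fun s => a <= s <= b) (dfn md k t) t) /\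
  (forall c : nat -> R,
     (forall t, a <= t <= b -> sumR (dim md) (fun k => c k * fn md k t) = 0) ->
     forall k, (k < dim md)%nat -> c k = 0) /\
  pt md 0 = a /\ pt md (npts md - 1) = b /\
  (forall j, (j + 1 < npts md)%nat -> pt md j < pt md (j + 1)).

Definition is_Mmat (a b : R) (md : model) (M : mat) : Prop :=
  forall k l, (k < dim md)%nat -> (l < dim md)%nat ->
    forall pr : Riemann_integrable (fun t => dfn md k t * dfn md l t) a b,
      M k l = RiemannInt pr.

Definition Cmat (a : R) (md : model) (M : mat) : mat :=
  fun k l => M k l + fn md k a * fn md l a / a.

Definition Bmat (md : model) : mat :=
  fun k l => sumRange 1 (npts md)
               (fun j => dlt md j k * dlt md j l / hstep md j).

(* weights: om j : vec (the weight omega_{i,j} in R^m), 1 <= j <= n-1 *)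
Definition unbiased (md : model) (M : mat) (om : nat -> vec) : Prop :=
  forall k l, (k < dim md)%nat -> (l < dim md)%nat ->
    M k l = sumRange 1 (npts md) (fun j => om j k * dlt md j l).

Definition Gmat (md : model) (M Cinv : mat) (om : nat -> vec) : mat :=
  let m := dim md in
  fun k l =>
    - mmul m (mmul m Cinv M) Cinv k l
    + sumRange 1 (npts md)
        (fun j => hstep md j * mmul m (mmul m Cinv (outer (om j) (om j))) Cinv k l)
    + Cinv k l.

Definition gterm (md : model) (M Cinv : mat) (om : nat -> vec) (t : R) : R :=
  qform (dim md) (Gmat md M Cinv om) (fvec md t).

Definition gn (md1 md2 : model) (M1 M2 C1inv C2inv : mat)
    (om1 om2 : nat -> vec) (t : R) : R :=
  gterm md1 M1 C1inv om1 t + gterm md2 M2 C2inv om2 t.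

Definition wstar (md : model) (M Binv : mat) : nat -> vec :=
  fun j k => mvec (dim md) M (mvec (dim md) Binv (dlt md j)) k / hstep md j.

(* Main.v *)
Require Import Defs.
From Stdlib Require Import Reals Lra Lia FunctionalExtensionality.
Open Scope R_scope.

Lemma sumR_ext n f g : (forall i, (i < n)%nat -> f i = g i) -> sumR n f = sumR n g.
Proof. induction n; simpl; intros H; auto. rewrite IHn by (intros; apply H; lia). rewrite H by lia. auto. Qed.
Lemma sumR_add n f g : sumR n (fun i => f i + g i) = sumR n f + sumR n g.
Proof. induction n; simpl; [ring| rewrite IHn; ring]. Qed.
Lemma sumR_opp n f : sumR n (fun i => - f i) = - sumR n f.
Proof. induction n; simpl; [ring| rewrite IHn; ring]. Qed.
Lemma sumR_mult_l n c f : sumR n (fun i => c * f i) = c * sumR n f.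
Proof. induction n; simpl; [ring| rewrite IHn; ring]. Qed.
Lemma sumR_mult_r n c f : sumR n (fun i => f i * c) = sumR n f * c.
Proof. induction n; simpl; [ring| rewrite IHn; ring]. Qed.
Lemma sumR_zero n : sumR n (fun _ => 0) = 0.
Proof. induction n; simpl; [ring| rewrite IHn; ring]. Qed.
Lemma sumR_swap n m F : sumR n (fun i => sumR m (fun j => F i j)) = sumR m (fun j => sumR n (fun i => F i j)).
Proof. induction n; simpl. - now rewrite sumR_zero. - rewrite IHn, <- sumR_add. reflexivity. Qed.
Lemma sumR_prod n m f g : sumR n f * sumR m g = sumR n (fun i => sumR m (fun j => f i * g j)).
Proof. rewrite <- sumR_mult_r. apply sumR_ext; intros. rewrite <- sumR_mult_l. reflexivity. Qed.
Lemma sumR_le n f g : (forall i, (i < n)%nat -> f i <= g i) -> sumR n f <= sumR n g.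
Proof. induction n; simpl; intros H; [lra|]. assert (f n <= g n) by (apply H; lia). 
  assert (sumR n f <= sumR n g) by (apply IHn; intros; apply H; lia). lra. Qed.
Lemma sumR_delta m k g : sumR m (fun r => idm k r * g r) = if Nat.ltb k m then g k else 0.
Proof. induction m; simpl.
  - destruct (Nat.ltb_spec k 0); [lia|reflexivity].
  - rewrite IHm. unfold idm. destruct (Nat.ltb_spec k m), (Nat.ltb_spec k (S m)), (Nat.eqb_spec k m); try lia; subst; ring. Qed.
Lemma sumR_delta_l m k g : (k < m)%nat -> sumR m (fun r => idm k r * g r) = g k.
Proof. intros; rewrite sumR_delta. destruct (Nat.ltb_spec k m); [auto|lia]. Qed.
Lemma idm_sym i j : idm i j = idm j i.
Proof. unfold idm; now rewrite Nat.eqb_sym. Qed.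

Definition clamp a b s := Rmax a (Rmin b s).
Lemma clamp_in a b s : a <= b -> a <= clamp a b s <= b.
Proof. intros; unfold clamp, Rmax, Rmin; repeat destruct Rle_dec; lra. Qed.
Lemma clamp_id a b s : a <= s <= b -> clamp a b s = s.
Proof. intros; unfold clamp, Rmax, Rmin; repeat destruct Rle_dec; lra. Qed.
Lemma clamp_lip a b s x : a <= x <= b -> Rabs (clamp a b s - x) <= Rabs (s - x).
Proof. intros; unfold clamp, Rmax, Rmin; repeat destruct Rle_dec;
  unfold Rabs; repeat destruct Rcase_abs; lra. Qed.

Lemma cont_clamp a b (f : R -> R) x : a <= b -> a <= x <= b ->
  limit1_in f (fun s => a <= s <= b) (f x) x ->
  continuity_pt (fun s => f (clamp a b s)) x.
Proof.
  intros Hab Hx Hl eps Heps. destruct (Hl eps Heps) as [alp [Halp H]].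
  exists alp; split; auto. intros y [_ Hd]. simpl in *. unfold R_dist in *.
  rewrite (clamp_id a b x Hx). apply H. split. apply clamp_in; auto.
  simpl; unfold R_dist. eapply Rle_lt_trans; [apply clamp_lip|]; auto.
Qed.

Lemma M_sym a b md M : a < b -> model_ok a b md -> is_Mmat a b md M ->
  forall k l, (k < dim md)%nat -> (l < dim md)%nat -> M k l = M l k.
Proof.
  intros Hab [Hc _] HM k l Hk Hl.
  assert (pr : Riemann_integrable (fun t => dfn md k t * dfn md l t) a b).
  { apply (Riemann_integrable_ext (f := fun t => dfn md k (clamp a b t) * dfn md l (clamp a b t))).
    - intros x Hx. rewrite Rmin_left, Rmax_right in Hx by lra. rewrite clamp_id; auto.
    - apply continuity_implies_RiemannInt; [lra|]. intros x Hx.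
      apply continuity_pt_mult; apply cont_clamp; try lra; auto.
      apply (Hc k Hk x Hx). apply (Hc l Hl x Hx). }
  rewrite (HM k l Hk Hl pr).
  assert (E : (fun t => dfn md k t * dfn md l t) = (fun t => dfn md l t * dfn md k t)).
  { extensionality t; ring. }
  revert pr; rewrite E; intro pr. now rewrite (HM l k Hl Hk pr).
Qed.

Lemma inv_sym m C Ci : (forall k l, (k < m)%nat -> (l < m)%nat -> C k l = C l k) ->
  is_inverse m C Ci -> forall k l, (k < m)%nat -> (l < m)%nat -> Ci k l = Ci l k.
Proof.
  intros HC HI k l Hk Hl. symmetry.
  rewrite <- (sumR_delta_l m k (fun r => Ci l r)) by auto.
  transitivity (sumR m (fun r => sumR m (fun q => Ci k q * C q r) * Ci l r)).
  { apply sumR_ext; intros r Hr. f_equal. destruct (HI k r Hk Hr) as [_ H]. rewrite <- H. reflexivity. }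
  transitivity (sumR m (fun r => sumR m (fun q => Ci k q * (Ci l r * C r q)))).
  { apply sumR_ext; intros r Hr. rewrite <- sumR_mult_r. apply sumR_ext; intros q Hq.
    rewrite (HC r q) by auto. ring. }
  rewrite sumR_swap.
  transitivity (sumR m (fun q => idm l q * Ci k q)).
  { apply sumR_ext; intros q Hq. rewrite sumR_mult_l. destruct (HI l q Hl Hq) as [_ H].
    unfold mmul in H. rewrite H. ring. }
  apply sumR_delta_l; auto.
Qed.

Lemma wstar_unb md M Binv : is_inverse (dim md) (Bmat md) Binv -> unbiased md M (wstar md M Binv).
Proof.
  intros HI kk l Hk Hl. unfold sumRange, wstar, mvec. symmetry.
  set (N := (npts md - 1)%nat).
  set (D := fun k q => dlt md (1 + k) q). set (H := fun k => hstep md (1 + k)).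
  change (sumR N (fun k => sumR (dim md) (fun p => M kk p * sumR (dim md) (fun q => Binv p q * D k q)) / H k * D k l) = M kk l).
  transitivity (sumR N (fun k => sumR (dim md) (fun p => sumR (dim md) (fun q => M kk p * Binv p q * (D k q * D k l / H k))))).
  { apply sumR_ext; intros k Hk'. unfold Rdiv. rewrite <- !sumR_mult_r. apply sumR_ext; intros p Hp.
    rewrite <- sumR_mult_l, <- !sumR_mult_r. apply sumR_ext; intros q Hq. ring. }
  rewrite sumR_swap.
  transitivity (sumR (dim md) (fun p => M kk p * sumR (dim md) (fun q => Binv p q * Bmat md q l))).
  { apply sumR_ext; intros p Hp. rewrite sumR_swap. rewrite <- sumR_mult_l. apply sumR_ext; intros q Hq.
    unfold Bmat, sumRange. rewrite <- !sumR_mult_l. apply sumR_ext; intros k Hk'. unfold D, H. ring. }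
  transitivity (sumR (dim md) (fun p => idm l p * M kk p)).
  { apply sumR_ext; intros p Hp. destruct (HI p l Hp Hl) as [_ E]. unfold mmul in E. rewrite E, idm_sym. ring. }
  apply sumR_delta_l; auto.
Qed.

Lemma qform_add m A B v : qform m (fun k l => A k l + B k l) v = qform m A v + qform m B v.
Proof. unfold qform. rewrite <- sumR_add. apply sumR_ext; intros. rewrite <- sumR_add. apply sumR_ext; intros. ring. Qed.

Lemma qform_sum m N c T v : qform m (fun k l => sumR N (fun j => c j * T j k l)) v = sumR N (fun j => c j * qform m (T j) v).
Proof.
  unfold qform.
  transitivity (sumR m (fun k => sumR N (fun j => sumR m (fun l => c j * (v k * T j k l * v l))))).
  { apply sumR_ext; intros k Hk. rewrite <- sumR_swap. apply sumR_ext; intros l Hl.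
    rewrite <- sumR_mult_l, <- sumR_mult_r. apply sumR_ext; intros. ring. }
  rewrite sumR_swap. apply sumR_ext; intros j Hj. rewrite <- sumR_mult_l. apply sumR_ext; intros k Hk.
  rewrite <- sumR_mult_l. reflexivity.
Qed.

Lemma qform_outer m C u f : (forall k l, (k < m)%nat -> (l < m)%nat -> C k l = C l k) ->
  qform m (mmul m (mmul m C (outer u u)) C) f =
  sumR m (fun r => sumR m (fun k => f k * C k r) * u r) * sumR m (fun r => sumR m (fun k => f k * C k r) * u r).
Proof.
  intros HC. unfold qform, mmul, outer.
  transitivity (sumR m (fun k => sumR m (fun l => (f k * sumR m (fun r => C k r * u r)) * (sumR m (fun q => u q * C q l) * f l)))).
  { apply sumR_ext; intros k Hk; apply sumR_ext; intros l Hl.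
    transitivity (f k * (sumR m (fun r => C k r * u r) * sumR m (fun q => u q * C q l)) * f l); [|ring].
    f_equal; f_equal. rewrite <- sumR_mult_l. apply sumR_ext; intros q Hq.
    rewrite <- !sumR_mult_r. apply sumR_ext; intros. ring. }
  transitivity (sumR m (fun k => f k * sumR m (fun r => C k r * u r)) * sumR m (fun l => sumR m (fun q => u q * C q l) * f l)).
  { rewrite sumR_prod; reflexivity. }
  f_equal.
  - transitivity (sumR m (fun k => sumR m (fun r => f k * C k r * u r))).
    { apply sumR_ext; intros. rewrite <- sumR_mult_l. apply sumR_ext; intros. ring. }
    rewrite sumR_swap. apply sumR_ext; intros. rewrite <- sumR_mult_r. reflexivity.
  - transitivity (sumR m (fun l => sumR m (fun q => u q * (f l * C l q)))).
    { apply sumR_ext; intros l Hl. rewrite <- sumR_mult_r. apply sumR_ext; intros q Hq. rewrite (HC q l) by auto. ring. }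
    rewrite sumR_swap. apply sumR_ext; intros. rewrite <- sumR_mult_r. apply sumR_ext; intros; ring.
Qed.

Definition vv md Cinv t : vec := fun r => sumR (dim md) (fun k => fvec md t k * Cinv k r).
Definition alpha md (v u : vec) := sumR (dim md) (fun r => v r * u r).
Definition Q0 md M Cinv t := qform (dim md) (fun k l => - mmul (dim md) (mmul (dim md) Cinv M) Cinv k l + Cinv k l) (fvec md t).

Lemma gterm_eq md M Cinv om t :
  (forall k l, (k < dim md)%nat -> (l < dim md)%nat -> Cinv k l = Cinv l k) ->
  gterm md M Cinv om t = Q0 md M Cinv t +
    sumR (npts md - 1) (fun i => hstep md (1+i) * (alpha md (vv md Cinv t) (om (1+i)%nat) * alpha md (vv md Cinv t) (om (1+i)%nat))).
Proof.
  intros HC. unfold gterm.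
  replace (Gmat md M Cinv om) with (fun k l =>
     (fun k l => - mmul (dim md) (mmul (dim md) Cinv M) Cinv k l + Cinv k l) k l +
     (fun k l => sumR (npts md - 1) (fun i => hstep md (1+i) * (fun i => mmul (dim md) (mmul (dim md) Cinv (outer (om (1+i)%nat) (om (1+i)%nat))) Cinv) i k l)) k l).
  2:{ extensionality k; extensionality l. unfold Gmat, sumRange. cbv zeta. ring. }
  rewrite qform_add, qform_sum. unfold Q0. f_equal. apply sumR_ext; intros i Hi.
  rewrite qform_outer by auto. reflexivity.
Qed.

Lemma core N (h x y : nat -> R) K : (forall i, (i < N)%nat -> 0 <= h i) ->
  sumR N (fun i => h i * x i * y i) = K -> sumR N (fun i => h i * y i * y i) = K ->
  sumR N (fun i => h i * (y i * y i)) <= sumR N (fun i => h i * (x i * x i)).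
Proof.
  intros Hh E1 E2.
  assert (P : 0 <= sumR N (fun i => h i * ((x i - y i) * (x i - y i)))).
  { rewrite <- (sumR_zero N). apply sumR_le; intros i Hi. apply Rmult_le_pos; auto. apply Rle_0_sqr. }
  assert (Q : sumR N (fun i => h i * ((x i - y i) * (x i - y i))) =
     sumR N (fun i => h i * (x i * x i)) + (-2) * sumR N (fun i => h i * x i * y i) + sumR N (fun i => h i * y i * y i)).
  { rewrite <- sumR_mult_l, <- !sumR_add. apply sumR_ext; intros; ring. }
  assert (R : sumR N (fun i => h i * (y i * y i)) = sumR N (fun i => h i * y i * y i)).
  { apply sumR_ext; intros; ring. }
  lra.
Qed.

Definition cc md M Binv (v : vec) : vec := fun q => sumR (dim md) (fun r => v r * sumR (dim md) (fun p => M r p * Binv p q)).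

Lemma hy md M Binv v i : hstep md (1+i) <> 0 ->
  hstep md (1+i) * alpha md v (wstar md M Binv (1+i)%nat) = sumR (dim md) (fun q => cc md M Binv v q * dlt md (1+i) q).
Proof.
  intros Hh. unfold alpha. rewrite <- sumR_mult_l.
  transitivity (sumR (dim md) (fun r => v r * mvec (dim md) M (mvec (dim md) Binv (dlt md (1+i))) r)).
  { apply sumR_ext; intros. unfold wstar. field. auto. }
  unfold mvec, cc.
  transitivity (sumR (dim md) (fun r => sumR (dim md) (fun p => sumR (dim md) (fun q => v r * M r p * Binv p q * dlt md (1+i) q)))).
  { apply sumR_ext; intros r Hr. rewrite <- sumR_mult_l. apply sumR_ext; intros p Hp.
    rewrite <- sumR_mult_l, <- sumR_mult_l. apply sumR_ext; intros; ring. }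
  transitivity (sumR (dim md) (fun q => sumR (dim md) (fun r => sumR (dim md) (fun p => v r * M r p * Binv p q * dlt md (1+i) q)))).
  { transitivity (sumR (dim md) (fun r => sumR (dim md) (fun q => sumR (dim md) (fun p => v r * M r p * Binv p q * dlt md (1+i) q)))).
    { apply sumR_ext; intros. apply sumR_swap. }
    apply sumR_swap. }
  apply sumR_ext; intros q Hq. rewrite <- sumR_mult_r. apply sumR_ext; intros r Hr.
  rewrite <- sumR_mult_l. rewrite <- sumR_mult_r. apply sumR_ext; intros; ring.
Qed.

Lemma Ez md M Binv v z : (forall i, (i < npts md - 1)%nat -> hstep md (1+i) <> 0) -> unbiased md M z ->
  sumR (npts md - 1) (fun i => hstep md (1+i) * alpha md v (z (1+i)%nat) * alpha md v (wstar md M Binv (1+i)%nat))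
  = sumR (dim md) (fun s => sumR (dim md) (fun q => v s * cc md M Binv v q * M s q)).
Proof.
  intros Hh Hu.
  transitivity (sumR (npts md - 1) (fun i => sumR (dim md) (fun s => sumR (dim md) (fun q =>
      v s * cc md M Binv v q * (z (1+i)%nat s * dlt md (1+i) q))))).
  { apply sumR_ext; intros i Hi.
    transitivity (alpha md v (z (1+i)%nat) * (hstep md (1+i) * alpha md v (wstar md M Binv (1+i)%nat))); [ring|].
    rewrite hy by auto. unfold alpha. rewrite sumR_prod. apply sumR_ext; intros; apply sumR_ext; intros; ring. }
  rewrite sumR_swap. apply sumR_ext; intros s Hs. rewrite sumR_swap. apply sumR_ext; intros q Hq.
  rewrite (Hu s q Hs Hq). unfold sumRange. rewrite <- sumR_mult_l. apply sumR_ext; intros; ring.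
Qed.

Lemma key md M Binv Cinv om t :
  (forall i, (i < npts md - 1)%nat -> 0 < hstep md (1+i)) ->
  (forall k l, (k < dim md)%nat -> (l < dim md)%nat -> Cinv k l = Cinv l k) ->
  is_inverse (dim md) (Bmat md) Binv ->
  unbiased md M om ->
  gterm md M Cinv (wstar md M Binv) t <= gterm md M Cinv om t.
Proof.
  intros Hh HC HB Hu. rewrite !gterm_eq by auto. apply Rplus_le_compat_l.
  assert (Hh' : forall i, (i < npts md - 1)%nat -> hstep md (1+i) <> 0) by (intros i Hi; specialize (Hh i Hi); lra).
  apply (core _ _ _ _ (sumR (dim md) (fun s => sumR (dim md) (fun q => vv md Cinv t s * cc md M Binv (vv md Cinv t) q * M s q)))).
  - intros i Hi; left; auto.
  - apply Ez; auto.
  - apply Ez; auto. apply wstar_unb; auto.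
Qed.

Lemma hpos a b md : model_ok a b md -> forall i, (i < npts md - 1)%nat -> 0 < hstep md (1+i).
Proof.
  intros (_ & _ & _ & _ & Hp) i Hi. unfold hstep.
  replace (1 + i - 1)%nat with i by lia. replace (1 + i)%nat with (i + 1)%nat by lia.
  specialize (Hp i ltac:(lia)). lra.
Qed.



Lemma Csym a b md M C : 0 < a -> a < b -> model_ok a b md -> is_Mmat a b md M -> is_inverse (dim md) (Cmat a md M) C ->
  forall k l, (k < dim md)%nat -> (l < dim md)%nat -> C k l = C l k.
Proof.
  intros Ha Hab Hok HM HI. apply (inv_sym _ (Cmat a md M)); auto.
  intros k l Hk Hl. unfold Cmat. rewrite (M_sym a b md M Hab Hok HM k l Hk Hl). field. lra.
Qed.

Lemma rpow_mono x y p : 0 < p -> x <= y -> rpow x p <= rpow y p.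
Proof.
  intros Hp Hxy. unfold rpow. destruct (Rlt_dec 0 x), (Rlt_dec 0 y).
  - apply Rle_Rpower_l; lra.
  - lra.
  - left; apply exp_pos.
  - lra.
Qed.

Theorem theorem4p1 (a b : R) (md1 md2 : model)
  (M1 M2 C1inv C2inv B1inv B2inv : mat) :
  0 < a -> a < b ->
  model_ok a b md1 -> model_ok a b md2 ->
  is_Mmat a b md1 M1 -> is_Mmat a b md2 M2 ->
  is_inverse (dim md1) (Cmat a md1 M1) C1inv ->
  is_inverse (dim md2) (Cmat a md2 M2) C2inv ->
  is_inverse (dim md1) (Bmat md1) B1inv ->
  is_inverse (dim md2) (Bmat md2) B2inv ->
  let w1 := wstar md1 M1 B1inv in
  let w2 := wstar md2 M2 B2inv in
  let g := gn md1 md2 M1 M2 C1inv C2inv in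
  unbiased md1 M1 w1 /\ unbiased md2 M2 w2 /\
  (forall om1 om2 : nat -> vec,
     unbiased md1 M1 om1 -> unbiased md2 M2 om2 ->
     (* p in [1, oo) *)
     (forall p : R, 1 <= p ->
        forall (pr1 : Riemann_integrable (fun t => rpow (g w1 w2 t) p) a b)
               (pr2 : Riemann_integrable (fun t => rpow (g om1 om2 t) p) a b),
          rpow (RiemannInt pr1) (1 / p) <= rpow (RiemannInt pr2) (1 / p)) /\
     (* p = oo *)
     (forall s1 s2 : R,
        is_lub (fun y => exists t, a <= t <= b /\ y = g w1 w2 t) s1 ->
        is_lub (fun y => exists t, a <= t <= b /\ y = g om1 om2 t) s2 ->
        s1 <= s2)).
Proof.
  intros Ha Hab Ok1 Ok2 HM1 HM2 HC1 HC2 HB1 HB2 w1 w2 g.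
  split; [apply wstar_unb; auto|]. split; [apply wstar_unb; auto|].
  intros om1 om2 U1 U2.
  assert (Hpt : forall t, g w1 w2 t <= g om1 om2 t).
  { intros t. unfold g, gn. apply Rplus_le_compat.
    - apply key; auto. apply (hpos a b); auto. apply (Csym a b md1 M1); auto.
    - apply key; auto. apply (hpos a b); auto. apply (Csym a b md2 M2); auto. }
  split.
  - intros p Hp pr1 pr2. apply rpow_mono.
    + unfold Rdiv. rewrite Rmult_1_l. apply Rinv_0_lt_compat; lra.
    + apply RiemannInt_P19; [lra|]. intros x _. apply rpow_mono; [lra|]. apply Hpt.
  - intros s1 s2 [_ L1] [U _]. apply L1. intros y [t [Ht ->]].
    eapply Rle_trans; [apply Hpt|]. apply U. exists t; auto.
Qed.
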